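(* Let $k$ be a field and let $A$ be a $k$-algebra with filtration $A_0\subseteq A_1\subseteq\cdots$ (subspaces with $\bigcup_nA_n=A$ and $A_iA_j\subseteq A_{i+j}$). Let $R=\bigoplus_{n\ge0}x^nA_n\subseteq A[x]$ be the Rees algebra, and suppose every element of $R$ is integral over $k[x]$. Then $\operatorname{gr}(A)_{\ge1}=\bigoplus_{n\ge1}A_n/A_{n-1}$ is nil.
   Context: $A$ is associative with unit, $A[x]$ is the polynomial algebra in a central indeterminate $x$. An element $a(x)\in A[x]$ is integral over $k[x]$ if $a(x)^n+p_{n-1}(x)a(x)^{n-1}+\cdots+p_0(x)=0$ for some $n\ge1$ and $p_i(x)\in k[x]$. The associated graded algebra is $\operatorname{gr}(A)=A_0\oplus A_1/A_0\oplus A_2/A_1\oplus\cdots$ with multiplication $(a_p+A_{p-1})(a_q+A_{q-1})=a_pa_q+A_{p+q-1}$ for $a_p\in A_p,a_q\in A_q$ ($A_{-1}=\{0\}$), extended linearly. Nil means every element is nilpotent. *)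

(* Defs.v *)
From HB Require Import structures.
From mathcomp Require Import all_boot all_order all_algebra.
Set Implicit Arguments. Unset Strict Implicit. Unset Printing Implicit Defensive.
Import GRing.Theory.
Local Open Scope ring_scope.

Section Filtered.
Variables (k : fieldType) (A : algType k).

Definition is_filtration (F : nat -> {pred A}) : Prop :=
  [/\ (forall n, 0 \in F n),
      (forall n (c : k) u v, u \in F n -> v \in F n -> c *: u + v \in F n),
      (forall n a, a \in F n -> a \in F n.+1),
      (forall a, exists n, a \in F n) &
      (forall i j a b, a \in F i -> b \in F j -> a * b \in F (i + j))].

Definition in_rees (F : nat -> {pred A}) (p : {poly A}) : Prop :=
  forall n, p`_n \in F n.

Definition integral_over_kx (a : {poly A}) : Prop :=
  exists n : nat, (0 < n)%N /\
    exists ps : 'I_n -> {poly k},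
      a ^+ n + \sum_(i < n) map_poly (in_alg A) (ps i) * a ^+ i = 0.

Definition Fprev (F : nat -> {pred A}) (d : nat) : {pred A} :=
  if d is d'.+1 then F d' else pred1 0.

(* Elements of gr(A) are represented by finitely supported families
   c : nat -> A with c d ∈ A_d; the class of c is Σ_d (c d + A_(d-1)). *)
Definition gr_rep (F : nat -> {pred A}) (c : nat -> A) : Prop :=
  (exists N, forall d, (N <= d)%N -> c d = 0) /\ (forall d, c d \in F d).

Definition gr_zero (F : nat -> {pred A}) (c : nat -> A) : Prop :=
  forall d, c d \in Fprev F d.

Definition gr_mul (c e : nat -> A) : nat -> A :=
  fun m => \sum_(i < m.+1) c i * e (m - i)%N.

(* c^(n+1) *)
Definition gr_powS (c : nat -> A) (n : nat) : nat -> A :=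
  iter n (gr_mul c) c.

Definition gr_pos_nil (F : nat -> {pred A}) : Prop :=
  forall c : nat -> A, gr_rep F c -> c 0%N = 0 ->
    exists n : nat, gr_zero F (gr_powS c n).

End Filtered.

(* Main.v *)
Require Import Defs.
From mathcomp Require Import all_boot all_order all_algebra.
Local Open Scope ring_scope.
Import GRing.Theory.

Lemma F0 (k : fieldType) (A : algType k) (F : nat -> {pred A}) :
  is_filtration F -> forall n, 0 \in F n.
Proof. by case. Qed.

Lemma FD (k : fieldType) (A : algType k) (F : nat -> {pred A}) :
  is_filtration F -> forall n u v, u \in F n -> v \in F n -> u + v \in F n.
Proof. by case=> _ h _ _ _ n u v hu hv; rewrite -(scale1r u); apply: h. Qed.

Lemma FZ (k : fieldType) (A : algType k) (F : nat -> {pred A}) :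
  is_filtration F -> forall n (c : k) u, u \in F n -> c *: u \in F n.
Proof. by move=> hF n c u hu; rewrite -(addr0 (c *: u)); case: hF => h0 h _ _ _; apply: h. Qed.

Lemma FN (k : fieldType) (A : algType k) (F : nat -> {pred A}) :
  is_filtration F -> forall n u, u \in F n -> - u \in F n.
Proof. by move=> hF n u hu; rewrite -scaleN1r; apply: FZ. Qed.

Lemma Fmono (k : fieldType) (A : algType k) (F : nat -> {pred A}) :
  is_filtration F -> forall i j a, (i <= j)%N -> a \in F i -> a \in F j.
Proof.
move=> hF i j a /subnK <-; elim: (j - i)%N => // d IH ha.
by rewrite addSn; case: hF => _ _ h _ _; apply: h; apply: IH.
Qed.

Lemma FM (k : fieldType) (A : algType k) (F : nat -> {pred A}) :
  is_filtration F -> forall i j a b, a \in F i -> b \in F j -> a * b \in F (i + j)%N.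
Proof. by case=> _ _ _ _ h. Qed.

Lemma Fsum (k : fieldType) (A : algType k) (F : nat -> {pred A}) :
  is_filtration F -> forall n m (f : 'I_m -> A), (forall i, f i \in F n) ->
  \sum_(i < m) f i \in F n.
Proof. by move=> hF n m f hf; apply: (big_ind (fun x => x \in F n)) => [|x y|i _]; [exact: F0 | exact: FD | exact: hf]. Qed.

Lemma Fprev_F (k : fieldType) (A : algType k) (F : nat -> {pred A}) :
  is_filtration F -> forall m a, a \in Fprev F m -> a \in F m.
Proof.
move=> hF [|m] a /=; last by case: hF => _ _ h _ _; apply: h.
by rewrite inE => /eqP ->; apply: F0.
Qed.

Lemma Fprev0 (k : fieldType) (A : algType k) (F : nat -> {pred A}) :
  is_filtration F -> forall m, 0 \in Fprev F m.
Proof. by move=> hF [|m] /=; [rewrite inE | apply: F0]. Qed.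

Lemma FprevD (k : fieldType) (A : algType k) (F : nat -> {pred A}) :
  is_filtration F -> forall m u v, u \in Fprev F m -> v \in Fprev F m -> u + v \in Fprev F m.
Proof.
move=> hF [|m] u v /=; last by apply: FD.
by rewrite !inE => /eqP -> /eqP ->; rewrite addr0.
Qed.

Lemma FprevZ (k : fieldType) (A : algType k) (F : nat -> {pred A}) :
  is_filtration F -> forall m (c : k) u, u \in Fprev F m -> c *: u \in Fprev F m.
Proof.
move=> hF [|m] c u /=; last by apply: FZ.
by rewrite !inE => /eqP ->; rewrite scaler0.
Qed.

Lemma FprevN (k : fieldType) (A : algType k) (F : nat -> {pred A}) :
  is_filtration F -> forall m u, u \in Fprev F m -> - u \in Fprev F m.
Proof. by move=> hF m u hu; rewrite -scaleN1r; apply: FprevZ. Qed.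

Lemma Fprevsum (k : fieldType) (A : algType k) (F : nat -> {pred A}) :
  is_filtration F -> forall n (I : finType) (P : pred I) (f : I -> A),
  (forall i, P i -> f i \in Fprev F n) -> \sum_(i | P i) f i \in Fprev F n.
Proof. by move=> hF n I P f hf; apply: (big_ind (fun x => x \in Fprev F n)) => [|x y|i hi]; [exact: Fprev0 | exact: FprevD | exact: hf]. Qed.

Lemma FprevM (k : fieldType) (A : algType k) (F : nat -> {pred A}) :
  is_filtration F -> forall l d a b, a \in Fprev F l -> b \in F d ->
  a * b \in Fprev F (l + d)%N.
Proof.
move=> hF [|l] d a b /=.
  by move=> /eqP -> _; rewrite mul0r; exact: Fprev0.
by move=> ha hb; apply: FM.
Qed.

Arguments F0 {k A F}.
Arguments FD {k A F}.
Arguments FZ {k A F}.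
Arguments FN {k A F}.
Arguments Fmono {k A F}.
Arguments FM {k A F}.
Arguments Fsum {k A F}.
Arguments Fprev_F {k A F}.
Arguments Fprev0 {k A F}.
Arguments FprevD {k A F}.
Arguments FprevZ {k A F}.
Arguments FprevN {k A F}.
Arguments Fprevsum {k A F}.
Arguments FprevM {k A F}.

Lemma reesM (k : fieldType) (A : algType k) (F : nat -> {pred A}) :
  is_filtration F -> forall Q S : {poly A}, in_rees F Q -> in_rees F S -> in_rees F (Q * S).
Proof.
move=> hF Q S hQ hS m; rewrite coefM; apply: (Fsum hF) => i.
have := FM hF _ _ _ _ (hQ i) (hS (m - i)%N).
by rewrite subnKC // -ltnS.
Qed.

Lemma reesX (k : fieldType) (A : algType k) (F : nat -> {pred A}) :
  is_filtration F -> forall P : {poly A}, in_rees F P -> forall e, in_rees F (P ^+ e.+1).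
Proof.
move=> hF P hP; elim=> [|e IH]; first by rewrite expr1.
by rewrite exprS; apply: reesM.
Qed.

Lemma coef0X (A : nzRingType) (P : {poly A}) : P`_0 = 0 -> forall e, (P ^+ e.+1)`_0 = 0.
Proof. by move=> h0 e; rewrite exprS coef0M h0 mul0r. Qed.

Lemma term_lem (k : fieldType) (A : algType k) (F : nat -> {pred A}) :
  is_filtration F -> forall (q : {poly k}) (Q : {poly A}), in_rees F Q -> forall m,
  (map_poly (in_alg A) q * Q)`_m - q`_0 *: Q`_m \in Fprev F m.
Proof.
move=> hF q Q hQ m; rewrite coefM big_ord_recl coef_map /= subn0.
rewrite mulr_algl addrAC subrr add0r.
case: m => [|m]; first by rewrite big_ord0; exact: (Fprev0 hF).
apply: (Fsum hF) => i; rewrite coef_map /= mulr_algl.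
apply: (FZ hF); apply: (Fmono hF _ _ _ _ (hQ _)).
by rewrite /bump /= subSS leq_subr.
Qed.

Arguments reesM {k A F}.
Arguments reesX {k A F}.
Arguments term_lem {k A F}.

Lemma lemL (k : fieldType) (A : algType k) (F : nat -> {pred A}) :
  is_filtration F -> forall P : {poly A}, in_rees F P -> P`_0 = 0 ->
  forall j d m, (forall l, (l < m)%N -> (P ^+ j.+1)`_l \in Fprev F l) ->
  (P ^+ (j.+1 + d.+1))`_m \in Fprev F m.
Proof.
move=> hF P hP h0 j d m IH; rewrite exprD coefM big_ord_recr /= subnn.
rewrite coef0X // mulr0 addr0; apply: (Fprevsum hF) => i _.
have := FprevM hF _ _ _ _ (IH i (ltn_ord i)) (reesX hF _ hP d (m - i)%N).
by rewrite subnKC // ltnW.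
Qed.

Lemma grpow (k : fieldType) (A : algType k) (c : nat -> A) (P : {poly A}) :
  (forall d, P`_d = c d) -> forall n m, gr_powS c n m = (P ^+ n.+1)`_m.
Proof.
move=> hP; elim=> [|n IH] m; first by rewrite expr1 hP.
rewrite /gr_powS iterS -/(gr_powS c n) exprS coefM /gr_mul.
by apply: eq_bigr => i _; rewrite hP IH.
Qed.

Theorem corollary5p3 (k : fieldType) (A : algType k) (F : nat -> {pred A}) :
  is_filtration F ->
  (forall p : {poly A}, in_rees F p -> integral_over_kx p) ->
  gr_pos_nil F.
Proof.
move=> hF hint c [[N hN] hcF] c0.
pose P : {poly A} := \poly_(d < N) c d.
have hPc : forall d, P`_d = c d.
  move=> d; rewrite coef_poly; case: ltnP => // h; by rewrite hN.
have hP : in_rees F P by move=> d; rewrite hPc.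
have P0 : P`_0 = 0 by rewrite hPc.
have [n [n0 [ps Heq]]] := hint P hP.
have Heq' : P ^+ n.+1 + \sum_(i < n) map_poly (in_alg A) (ps i) * P ^+ i.+1 = 0.
  rewrite exprSr (eq_bigr (fun i : 'I_n => map_poly (in_alg A) (ps i) * P ^+ i * P)); last first.
    by move=> i _; rewrite exprSr mulrA.
  by rewrite -mulr_suml -mulrDl Heq mul0r.
pose b (i : nat) : k := if @insub _ (fun x => (x < n)%N) 'I_n i is Some l then (ps l)`_0 else (i == n)%:R.
have hb : forall i : 'I_n, b i = (ps i)`_0 by move=> i; rewrite /b valK.
have hbn : b n = 1 by rewrite /b insubN ?ltnn ?eqxx.
have rel : forall m, \sum_(i < n.+1) b i *: (P ^+ i.+1)`_m \in Fprev F m.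
  move=> m; rewrite big_ord_recr /= hbn scale1r addrC.
  have -> : (P ^+ n.+1)`_m + \sum_(i < n) b (widen_ord (leqnSn n) i) *: (P ^+ i.+1)`_m =
     - \sum_(i < n) ((map_poly (in_alg A) (ps i) * P ^+ i.+1)`_m - (ps i)`_0 *: (P ^+ i.+1)`_m).
    apply/eqP; rewrite -subr_eq0 opprK sumrB.
    rewrite (eq_bigr (fun i : 'I_n => (ps i)`_0 *: (P ^+ i.+1)`_m)); last by move=> i _; rewrite hb.
    by rewrite addrACA subrr addr0 -coef_sum -coefD Heq' coef0.
  apply: (FprevN hF); apply: (Fprevsum hF) => i _; exact: (term_lem hF _ _ (reesX hF _ hP i)).
have exb : exists i, b i != 0 by exists n; rewrite hbn oner_neq0.
case: (ex_minnP exb) => j bj jmin.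
have jn : (j <= n)%N by apply: jmin; rewrite hbn oner_neq0.
exists j => m; rewrite (@grpow _ _ c P hPc).
elim/ltn_ind: m => m IH.
have := rel m; rewrite (bigD1 (Ordinal (jn : j < n.+1)%N)) //=.
set S := (X in _ + X) => hS.
have hSm : S \in Fprev F m.
  apply: (Fprevsum hF) => i /= hij.
  case: (ltngtP i j) => [ilt|jlt|ieq].
  - have -> : b i = 0 by apply/eqP; apply: contraTT ilt => /jmin; rewrite -leqNgt.
    by rewrite scale0r; exact: (Fprev0 hF).
  - apply: (FprevZ hF); have -> : i.+1 = (j.+1 + (i - j.+1).+1)%N by rewrite -subSn // subnKC // ltnW.
    exact: (@lemL _ _ _ hF _ hP P0 j _ m IH).
  - by move: hij; rewrite -(inj_eq val_inj) /= ieq eqxx.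
have := FprevD hF _ _ _ hS (FprevN hF _ _ hSm).
rewrite addrK => h; have := FprevZ hF _ (b j)^-1 _ h.
by rewrite scalerA mulVf // scale1r.
Qed.
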